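(* Let $\mathcal X$ be locally convex and let $\rho$ be proper, quasiconvex and lower semicontinuous. Then $\mathcal B$ is nonempty and $$\rho(X)=\sup_{\psi\in\mathcal B}\rho(X|\psi)\quad\text{for all }X\in\mathcal X.$$
   Context: Standing setup: Let $\mathcal{X}$ be a real topological vector space partially ordered by a convex cone $\mathcal{X}_+\subset\mathcal X$; write $X\ge Y$ iff $X-Y\in\mathcal X_+$. Fix $N\in\mathbb N$ and: a set $\mathcal P\subset\mathbb R^N$ with $0\in\mathcal P$; a function $V_0:\mathbb R^N\to\mathbb R$ with $V_0(0)=0$ and $V_0(x)\ge -V_0(-x)$ for all $x\in\mathbb R^N$; a map $V_1:\mathbb R^N\to\mathcal X$ with $V_1(0)=0$ and $V_1(x)\le -V_1(-x)$ for all $x\in\mathbb R^N$; a set $\mathcal A\subset\mathcal X$ with $0\in\mathcal A$ and $\mathcal A+\mathcal X_+\subset\mathcal A$. The risk measure is $\rho:\mathcal X\to[-\infty,\infty]$, $\rho(X)=\inf\{V_0(x): x\in\mathcal P,\ X+V_1(x)\in\mathcal A\}$, with $\inf\emptyset=+\infty$. $\rho$ is proper if it never takes the value $-\infty$ and is not identically $+\infty$; quasiconvex if $\rho(\lambda X+(1-\lambda)Y)\le\max\{\rho(X),\rho(Y)\}$ for $\lambda\in[0,1]$. $\mathcal X'$ is the topological dual of $\mathcal X$. For $\psi\in\mathcal X'$: $\sigma_{\mathcal A}(\psi)=\inf_{X\in\mathcal A}\psi(X)$ and $\mathcal B=\{\psi\in\mathcal X':\sigma_{\mathcal A}(\psi)>-\infty\}$.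 For $X\in\mathcal X$, $\psi\in\mathcal X'$: $\rho(X|\psi)=\inf\{\rho(Y): Y\in\mathcal X,\ \psi(Y)\le\psi(X)\}$. *)

(* Defs.v *)
From HB Require Import structures.
From mathcomp Require Import all_boot all_order all_algebra.
From mathcomp Require Import all_classical all_reals all_analysis.
Set Implicit Arguments. Unset Strict Implicit. Unset Printing Implicit Defensive.
Import Order.TTheory GRing.Theory Num.Theory.
Import numFieldNormedType.Exports.
Local Open Scope classical_set_scope.
Local Open Scope ring_scope.

Section Defs.
Context {R : realType} {E : tvsType R}.

Definition convex_cone (C : set E) : Prop :=
  C 0 /\ (forall x y, C x -> C y -> C (x + y)) /\
  (forall (l : R) x, 0 <= l -> C x -> C (l *: x)).

Definition cone_le (C : set E) (X Y : E) : Prop := C (Y - X).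

Definition is_dual (psi : E -> R) : Prop :=
  (forall (a : R) (x y : E), psi (a *: x + y) = a * psi x + psi y) /\
  continuous psi.

Definition rho_of {N : nat} (P : set 'rV[R]_N) (V0 : 'rV[R]_N -> R)
  (V1 : 'rV[R]_N -> E) (A : set E) (X : E) : \bar R :=
  ereal_inf [set (V0 x)%:E | x in [set x | P x /\ A (X + V1 x)]].

Definition sigmaA (A : set E) (psi : E -> R) : \bar R :=
  ereal_inf [set (psi X)%:E | X in A].

Definition barrier_cone (A : set E) : set (E -> R) :=
  [set psi | is_dual psi /\ (-oo < sigmaA A psi)%E].

Definition rho_cond (rho : E -> \bar R) (X : E) (psi : E -> R) : \bar R :=
  ereal_inf [set rho Y | Y in [set Y | psi Y <= psi X]].

Definition proper_fun (rho : E -> \bar R) : Prop :=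
  (forall X, rho X != -oo%E) /\ (exists X, rho X != +oo%E).

Definition quasiconvex (rho : E -> \bar R) : Prop :=
  forall (X Y : E) (l : R), 0 <= l <= 1 ->
    (rho (l *: X + (1 - l) *: Y)%R <= maxe (rho X) (rho Y))%E.

End Defs.

(* Main.v *)
Require Import Defs.
From HB Require Import structures.
From mathcomp Require Import all_boot all_order all_algebra.
From mathcomp Require Import all_classical all_reals all_analysis.
From mathcomp Require Import lra.
Import Order.TTheory GRing.Theory Num.Theory.
Import numFieldNormedType.Exports.
Local Open Scope classical_set_scope.
Local Open Scope ring_scope.
Set Implicit Arguments. Unset Strict Implicit. Unset Printing Implicit Defensive.

Section Alg.
Variables (R : fieldType) (E : lmodType R).
Definition cmb (l : R) (x y : E) := l *: x + (1 - l) *: y.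

Lemma cmbD l a b c d : cmb l (a + b) (c + d) = cmb l a c + cmb l b d.
Proof. by rewrite /cmb !scalerDr addrACA. Qed.
Lemma cmbN l a c : cmb l (- a) (- c) = - cmb l a c.
Proof. by rewrite /cmb !scalerN opprD. Qed.
Lemma cmbxx l a : cmb l a a = a.
Proof. by rewrite /cmb -scalerDl addrC subrK scale1r. Qed.
Lemma cmb0 l : cmb l 0 0 = 0.
Proof. exact: cmbxx. Qed.

Lemma cmbV (l0 l1 l2 u1 u2 : E) l :
  cmb l (l0 - l1 + u1) (l0 - l2 + u2) = l0 - cmb l l1 l2 + cmb l u1 u2.
Proof. by rewrite cmbD cmbD cmbN cmbxx. Qed.

Lemma cmb_sum (s t : R) (x y : E) : s != 0 -> t != 0 -> s + t != 0 ->
  (s + t)^-1 *: (x + y) = cmb (s / (s + t)) (s^-1 *: x) (t^-1 *: y).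
Proof.
move=> s0 t0 st0; rewrite /cmb !scalerA.
have -> : 1 - s / (s + t) = t / (s + t).
  by apply: (mulIf st0); rewrite mulrBl mul1r -!mulrA mulVf // !mulr1 addrC addKr.
rewrite -!mulrA !(mulrC (s + t)^-1) !mulrA mulfV // mulfV // !mul1r.
by rewrite scalerDr.
Qed.

Lemma key_id (t : R) (l0 l u X : E) : t *: (l0 - l + u) = l0 - X ->
  X + t *: u = cmb t l l0.
Proof.
move=> h; have -> : X = l0 - t *: (l0 - l + u) by rewrite h opprB addrC subrK.
rewrite /cmb scalerBl scale1r !scalerDr scalerN opprD opprD opprK.
by rewrite -!addrA addNr addr0 [- _ + _]addrC addrCA.
Qed.
End Alg.


Lemma aux_sub (V : zmodType) (y a b : V) : y + a - b + - y = a - b.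
Proof. by rewrite addrAC [y + a]addrC addrK. Qed.

Section HahnBanach.
Variables (R : realType) (E : lmodType R) (p : E -> R).
Hypotheses (p_ge0 : forall x, 0 <= p x)
  (p_add : forall x y, p (x + y) <= p x + p y)
  (p_scale : forall t x, 0 < t -> p (t *: x) = t * p x).
Variable k0 : E.
Hypothesis pk0 : 1 <= p k0.

Lemma p0 : p 0 = 0.
Proof.
have h : p (2 *: (0:E)) = 2 * p 0 by apply: p_scale.
rewrite scaler0 in h; lra.
Qed.

Definition G0 : set (E * R) := [set z | exists t, z = (t *: k0, t)].

Record good (G : set (E * R)) : Prop := Good {
  g0 : G0 `<=` G;
  gfun : forall x a b, G (x, a) -> G (x, b) -> a = b;
  gadd : forall x y a b, G (x, a) -> G (y, b) -> G (x + y, a + b);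
  gscl : forall t x a, G (x, a) -> G (t *: x, t * a);
  gdom : forall x a, G (x, a) -> a <= p x }.

Lemma good0 : good G0.
Proof.
split.
- by [].
- move=> x a b [t [-> ->]] [s [/eqP + ->]].
  rewrite -subr_eq0 -scalerBl scaler_eq0 subr_eq0 => /orP[/eqP//|/eqP k00].
  by move: pk0; rewrite k00 p0; lra.
- move=> x y a b [t [-> ->]] [s [-> ->]]; exists (t + s); by rewrite scalerDl.
- move=> u x a [t [-> ->]]; exists (u * t); by rewrite scalerA.
- move=> x a [t [-> ->]]; have [t0|t0] := leP t 0.
    by apply: le_trans (p_ge0 _).
  by rewrite p_scale // ler_peMr //; apply: ltW.
Qed.

Lemma good_G00 G : good G -> G (0, 0).
Proof. by move=> gG; apply: (g0 gG); exists 0; rewrite scale0r. Qed.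

Definition T := {G : set (E * R) | good G}.
Definition Rel (A B : T) : bool := `[< sval A `<=` sval B >].

Lemma extend (G : set (E * R)) (gG : good G)
  (pm : forall H, good H -> G `<=` H -> H `<=` G) : forall x, exists a, G (x, a).
Proof.
move=> x; apply/not_existsP => nx.
pose S := [set r | exists y b, G (y, b) /\ r = b - p (y - x)].
pose c := sup S.
have ub : forall y b z d, G (y, b) -> G (z, d) -> b - p (y - x) <= p (z + x) - d.
  move=> y b z d Gy Gz; have := gdom gG (gadd gG Gy Gz).
  have := p_add (y - x) (z + x).
  have -> : y - x + (z + x) = y + z by rewrite addrCA subrK addrC.
  lra.
have G00 := good_G00 gG.
have S0 : S !=set0 by exists (0 - p (0 - x)), 0, 0.
have cle : forall z d, G (z, d) -> c <= p (z + x) - d.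
  move=> z d Gz; apply: ge_sup => // r [y [b [Gy ->]]]; exact: ub.
have cge : forall y b, G (y, b) -> b - p (y - x) <= c.
  move=> y b Gy; apply: sup_upper_bound; last by exists y, b.
  split => //; exists (p (0 + x) - 0) => r [y' [b' [Gy' ->]]]; exact: ub.
pose H := [set z | exists y b t, G (y, b) /\ z = (y + t *: x, b + t * c)].
have GH : G `<=` H.
  by move=> [y b] Gy; exists y, b, 0; rewrite scale0r mul0r !addr0.
have gH : good H.
  split.
  - by move=> z /(g0 gG) /GH.
  - move=> z a a' [y [b [t [Gy [-> ->]]]]] [y' [b' [t' [Gy' [e ->]]]]].
    have [tt'|tt'] := eqVneq t t'.
      subst t'; move/addIr: e => e; subst y'; by rewrite (gfun gG Gy Gy').
    exfalso; apply: (nx ((t - t')^-1 * (b' - b))).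
    have Gd := gadd gG Gy' (gscl gG (-1) Gy).
    have := gscl gG ((t - t')^-1) Gd.
    suff -> : (t - t')^-1 *: (y' + -1 *: y) = x by rewrite mulN1r.
    have -> : y' + -1 *: y = (t - t') *: x.
      have -> : y' = y + t *: x - t' *: x by rewrite e addrK.
      by rewrite scaleN1r scalerBl aux_sub.
    by rewrite scalerA mulVf ?scale1r // subr_eq0.
  - move=> z z' a a' [y [b [t [Gy [-> ->]]]]] [y' [b' [t' [Gy' [-> ->]]]]].
    exists (y + y'), (b + b'), (t + t'); split; first exact (gadd gG Gy Gy').
    congr pair; [rewrite scalerDl | rewrite mulrDl]; by rewrite addrACA.
  - move=> s z a [y [b [t [Gy [-> ->]]]]].
    exists (s *: y), (s * b), (s * t); split; first exact (gscl gG s Gy).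
    by rewrite scalerDr scalerA mulrDr mulrA.
  - move=> z a [y [b [t [Gy [-> ->]]]]] /=.
    have [t0|t0|->] := ltgtP t 0; last by rewrite mul0r addr0 scale0r addr0; exact: gdom gG _ _ Gy.
    + set s := - t; have s0 : 0 < s by rewrite oppr_gt0.
      have := cge _ _ (gscl gG (s^-1) Gy).
      have e : y + t *: x = s *: (s^-1 *: y - x).
        by rewrite scalerBr scalerA mulfV ?gt_eqF // scale1r /s scaleNr opprK.
      rewrite e p_scale // => h.
      have := ler_wpM2l (ltW s0) h; rewrite mulrBr mulrA mulfV ?gt_eqF // mul1r.
      rewrite /s; lra.
    + have := cle _ _ (gscl gG (t^-1) Gy).
      have e : y + t *: x = t *: (t^-1 *: y + x).
        by rewrite scalerDr scalerA mulfV ?gt_eqF // scale1r.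
      rewrite e p_scale // => h.
      have := ler_wpM2l (ltW t0) h; rewrite mulrBr mulrA mulfV ?gt_eqF // mul1r.
      lra.
apply: (nx c); apply: (pm _ gH GH).
by exists 0, 0, 1; rewrite add0r scale1r mul1r add0r.
Qed.

Lemma hahn_banach : exists f : E -> R,
  (forall a x y, f (a *: x + y) = a * f x + f y) /\
  (forall x, f x <= p x) /\ f k0 = 1.
Proof.
have Rrefl : forall t, Rel t t by move=> t; apply/asboolP.
have Rtrans : forall r s t, Rel r s -> Rel s t -> Rel r t.
  move=> r s t /asboolP rs /asboolP st; apply/asboolP; exact: subset_trans st.
have chains : forall A : set T, total_on A Rel -> exists t, forall s, A s -> Rel s t.
  move=> A tot.
  pose UB := fun z => G0 z \/ exists H : T, A H /\ sval H z.
  have common : forall z1 z2, UB z1 -> UB z2 ->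
      exists H, good H /\ H z1 /\ H z2 /\ H `<=` UB.
    move=> z1 z2 [h1|[H1 [A1 h1]]] [h2|[H2 [A2 h2]]].
    - by exists G0; split; [exact: good0|split; [|split]] => // w; left.
    - exists (sval H2); split; first exact: (svalP H2).
      split; first exact: (g0 (svalP H2)).
      by split => // w hw; right; exists H2.
    - exists (sval H1); split; first exact: (svalP H1).
      split => //; split; first exact: (g0 (svalP H1)).
      by move=> w hw; right; exists H1.
    - have [/asboolP r12|/asboolP r21] := tot _ _ A1 A2.
        exists (sval H2); split; first exact: (svalP H2).
        by split; [exact: r12|split => // w hw; right; exists H2].
      exists (sval H1); split; first exact: (svalP H1).
      by split => //; split; [exact: r21| move=> w hw; right; exists H1].
  have gUB : good UB.
    split.
    - by move=> z hz; left.
    - move=> x a b h1 h2; have [H [gH [H1 [H2 _]]]] := common _ _ h1 h2.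
      exact (gfun gH H1 H2).
    - move=> x y a b h1 h2; have [H [gH [H1 [H2 HU]]]] := common _ _ h1 h2.
      apply: HU; exact (gadd gH H1 H2).
    - move=> t x a h1; have [H [gH [H1 [_ HU]]]] := common _ _ h1 h1.
      apply: HU; exact (gscl gH t H1).
    - move=> x a h1; have [H [gH [H1 _]]] := common _ _ h1 h1.
      exact (gdom gH H1).
  exists (exist _ UB gUB) => s As; apply/asboolP => z sz; right; exists s; by [].
have [Gm pmG] := ZL_preorder (exist _ G0 good0) Rrefl Rtrans chains.
have gm := svalP Gm.
have ext := extend gm (fun H gH sub => (asboolP _ (pmG (exist _ H gH) (asboolT sub)))).
pose f x := sval (cid (ext x)).
have Gf : forall x, sval Gm (x, f x) by move=> x; exact: (svalP (cid (ext x))).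
exists f; split; [|split].
- move=> a x y; apply: (gfun gm (Gf _)).
  exact (gadd gm (gscl gm a (Gf x)) (Gf y)).
- move=> x; exact (gdom gm (Gf x)).
- apply: (gfun gm (Gf _)); apply: (g0 gm); exists 1; by rewrite scale1r.
Qed.

End HahnBanach.


Section Sep.
Variables (R : realType) (E : tvsType R).

Lemma absorb (U : set E) : nbhs 0 U -> forall v : E, exists2 s : R, 0 < s & U (s *: v).
Proof.
move=> nU v; have /= := scale_continuous ((0 : R^o), v) U.
rewrite scale0r => /(_ nU) [[B1 B2] /= [nB1 nB2] BU].
have [d hd] := nbhs_ex nB1.
exists (d%:num / 2); first by rewrite divr_gt0.
apply: (BU (d%:num / 2, v)); split => /=; last exact: nbhs_singleton.
apply: hd; rewrite /ball /= sub0r normrN gtr0_norm ?divr_gt0 //.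
have d0 : 0 < d%:num by []. lra.
Qed.


Lemma separation (L U : set E) (X l0 : E) :
  (forall x y l, 0 <= l <= 1 -> L x -> L y -> L (cmb l x y)) ->
  (forall x y l, 0 <= l <= 1 -> U x -> U y -> U (cmb l x y)) ->
  nbhs 0 U -> (forall u, U u -> ~ L (X + u)) -> L l0 ->
  exists psi : E -> R, is_dual psi /\ forall Y, L Y -> psi X < psi Y.
Proof.
move=> cL cU nU sep Ll0.
have U0 : U 0 := nbhs_singleton nU.
pose V := [set v | exists l u, L l /\ U u /\ v = l0 - l + u].
have UV : U `<=` V by move=> u Uu; exists l0, u; rewrite subrr add0r.
have cV : forall x y l, 0 <= l <= 1 -> V x -> V y -> V (cmb l x y).
  move=> x y l l01 [l1 [u1 [L1 [U1 ->]]]] [l2 [u2 [L2 [U2 ->]]]].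
  exists (cmb l l1 l2), (cmb l u1 u2); split; first exact: cL.
  split; [exact: cU|exact: cmbV].
pose Sv v := [set t : R | 0 < t /\ V (t^-1 *: v)].
pose p v := inf (Sv v).
have Sv0 : forall v, Sv v !=set0.
  move=> v; have [s s0 Us] := absorb nU v; exists s^-1; split; first by rewrite invr_gt0.
  by rewrite invrK; exact: UV.
have Svlb : forall v, has_lbound (Sv v) by move=> v; exists 0 => t [t0 _]; exact: ltW.
have p_ge0 : forall v, 0 <= p v.
  by move=> v; apply: lb_le_inf => // t [t0 _]; exact: ltW.
have p_le : forall v t, 0 < t -> V (t^-1 *: v) -> p v <= t.
  by move=> v t t0 Vt; apply: ge_inf => //; split.
have p_lt : forall v e, 0 < e -> exists2 t, Sv v t & t < p v + e.
  move=> v e e0; apply: inf_lt => //; lra.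
have p_add : forall x y, p (x + y) <= p x + p y.
  move=> x y; apply/ler_addgt0Pr => e e0.
  have e20 : 0 < e / 2 by rewrite divr_gt0.
  have [s [s0 Vs] ls] := p_lt x _ e20.
  have [t [t0 Vt] lt] := p_lt y _ e20.
  have st0 : 0 < s + t by rewrite addr_gt0.
  suff : p (x + y) <= s + t by lra.
  apply: p_le => //.
  rewrite cmb_sum ?gt_eqF //; apply: cV => //.
  apply/andP; split; first by rewrite divr_ge0 // ltW.
  rewrite ler_pdivrMr // mul1r; lra.
have p_scale_le : forall r v, 0 < r -> p (r *: v) <= r * p v.
  move=> r v r0; apply/ler_addgt0Pr => e e0.
  have [t [t0 Vt] lt] := p_lt v (e / r) (divr_gt0 e0 r0).
  have h : r * (e / r) = e by rewrite mulrCA mulfV ?gt_eqF // mulr1.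
  suff : p (r *: v) <= r * t by nra.
  apply: p_le; first exact: mulr_gt0.
  by rewrite scalerA invfM mulrAC mulVf ?gt_eqF // mul1r.
have p_scale : forall r v, 0 < r -> p (r *: v) = r * p v.
  move=> r v r0; apply/eqP; rewrite eq_le p_scale_le //=.
  have ri0 : 0 < r^-1 by rewrite invr_gt0.
  have := p_scale_le r^-1 (r *: v) ri0; rewrite scalerA mulVf ?gt_eqF // scale1r => h.
  by have := ler_wpM2l (ltW r0) h; rewrite mulrA mulfV ?gt_eqF // mul1r.
pose k0 := l0 - X.
have pk0 : 1 <= p k0.
  rewrite leNgt; apply/negP => lt1.
  have [t [t0 [l [u [Ll [Uu e]]]]] t1] := inf_lt (Sv0 k0) lt1.
  have e' : t *: (l0 - l + u) = l0 - X by rewrite -e scalerA mulfV ?gt_eqF // scale1r.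
  have t01 : 0 <= t <= 1 by rewrite ltW //= ltW.
  apply: (sep (t *: u)); last by rewrite (key_id e'); apply: cL.
  have -> : t *: u = cmb t u 0 by rewrite /cmb scaler0 addr0.
  by apply: cU.
have [f [flin [fp fk0]]] := hahn_banach p_ge0 p_add p_scale pk0.
have fD : forall x y, f (x + y) = f x + f y.
  by move=> x y; have := flin 1 x y; rewrite scale1r mul1r.
have f0 : f 0 = 0 by have := fD 0 0; rewrite addr0 => h; lra.
have fZ : forall a x, f (a *: x) = a * f x.
  by move=> a x; have := flin a x 0; rewrite !addr0 f0 addr0.
have fN : forall x, f (- x) = - f x.
  by move=> x; rewrite -scaleN1r fZ mulN1r.
have fU : forall u, U u -> f u <= 1.
  move=> u Uu; apply: le_trans (fp u) (p_le u 1 ltr01 _).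
  by rewrite invr1 scale1r; exact: UV.
exists f; split; first split => //.
- move=> x; apply/cvgrPdist_lt => e e0.
  have nW : nbhs 0 (U `&` [set w | U (- w)]).
    apply: filterI => //; apply: filterS (nbhs0N nU) => w [y Uy <-].
    by rewrite /= opprK.
  have e20 : 0 < e / 2 by rewrite divr_gt0.
  have e2n : e / 2 != 0 by rewrite gt_eqF.
  have nW2 := nbhs0Z e2n nW.
  apply: filterS (nbhsT x nW2) => y [z [w [Uw Unw] <-] <-].
  rewrite fD fZ; have := fU _ Uw; have := fU _ Unw; rewrite fN => h1 h2.
  rewrite opprD addrA subrr add0r normrN ltr_norml; apply/andP; split; nra.
- move=> Y LY; have [s s0 Us] := absorb nU k0.
  have VY : V (l0 - Y + s *: k0) by exists Y, (s *: k0).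
  have h1 : p (l0 - Y + s *: k0) <= 1 by apply: p_le; rewrite ?ltr01 // invr1 scale1r.
  have := le_trans (fp _) h1; rewrite fD fD fN fZ fk0 => h.
  have : f k0 = f l0 - f X by rewrite /k0 fD fN.
  lra.
Qed.

End Sep.


Lemma le_by_reals (R : realType) (x y : \bar R) :
  (forall m : R, (m%:E < x)%E -> (m%:E <= y)%E) -> (x <= y)%E.
Proof.
case: x => [r| |] h.
- case: y h => [s| |] h.
  + rewrite lee_fin; apply/ler_addgt0Pr => e e0.
    have := h (r - e)%R; rewrite !lte_fin lee_fin => /(_ ltac:(lra)); lra.
  + exact: leey.
  + by have := h (r - 1)%R; rewrite lte_fin => /(_ ltac:(lra)).
- case: y h => [s| |] h.
  + have := h (s + 1)%R; rewrite ltry lee_fin => /(_ isT) H; exfalso; lra.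
  + exact: leey.
  + by have := h 0; rewrite ltry => /(_ isT).
- exact: leNye.
Qed.

Unset Implicit Arguments.
Theorem mainTheorem19 (R : realType) (E : tvsType R) (Xplus : set E)
  (N : nat) (P : set 'rV[R]_N) (V0 : 'rV[R]_N -> R) (V1 : 'rV[R]_N -> E)
  (A : set E) :
  convex_cone Xplus ->
  P 0 ->
  V0 0 = 0 ->
  (forall x, - V0 (- x) <= V0 x) ->
  V1 0 = 0 ->
  (forall x, cone_le Xplus (V1 x) (- V1 (- x))) ->
  A 0 ->
  (forall X Z, A X -> Xplus Z -> A (X + Z)) ->
  proper_fun (rho_of P V0 V1 A) ->
  quasiconvex (rho_of P V0 V1 A) ->
  lower_semicontinuous (rho_of P V0 V1 A) ->
  (exists psi, barrier_cone A psi) /\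
  (forall X : E, rho_of P V0 V1 A X =
     ereal_sup [set rho_cond (rho_of P V0 V1 A) X psi | psi in barrier_cone A]).
Proof.
move=> _ _ _ _ _ _ A0 _ _ qc lsc.
set rho := rho_of P V0 V1 A.
have B0 : barrier_cone A (fun _ => 0).
  split.
    split; first by move=> a x y; rewrite mulr0 addr0.
    exact: cst_continuous.
  apply: (@lt_le_trans _ _ 0%E); first exact: ltNyr.
  by rewrite /sigmaA; apply: le_ereal_inf_tmp => z [Z AZ <-] /=.
split; first by exists (fun _ => 0).
move=> X; apply/eqP; rewrite eq_le; apply/andP; split; last first.
  apply: ge_ereal_sup => z [psi Bpsi <-].
  by rewrite /rho_cond; apply: ereal_inf_lbound; exists X => /=.
apply: le_by_reals => m mX.
have [[Y hY]|nY] := pselect (exists Y, (rho Y < m%:E)%E); last first.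
  apply: ereal_sup_ge; exists (rho_cond rho X (fun _ => 0)); first by exists (fun _ => 0).
  apply: le_ereal_inf_tmp => z [Y _ <-].
  by rewrite leNgt; apply/negP => h; apply: nY; exists Y.
have [y [x [Px AYx] <-] ltm] := ereal_inf_lt hY.
rewrite lte_fin in ltm.
pose L := [set Z | (rho Z <= m%:E)%E].
have LY : L Y by apply: ltW.
have cL : forall a b l, 0 <= l <= 1 -> L a -> L b -> L (cmb l a b).
  move=> a b l l01 La Lb; rewrite /L /=; apply: le_trans (qc a b l l01) _.
  by rewrite ge_max La Lb.
have [W nW hW] := lsc X m mX.
have [Bs Bconv [Bopen Bbasis]] := @locally_convex R E.
have [b [Bb bX] bW] := Bbasis X W nW.
have nb : nbhs X b by apply: open_nbhs_nbhs; split => //; exact: Bopen.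
have bconv : forall a c l, 0 <= l <= 1 -> b a -> b c -> b (cmb l a c).
  move=> a c l /andP[l0 l1] ba bc.
  have := Bconv b (mem_set Bb) a c (Itv01 l0 l1) (mem_set ba) (mem_set bc).
  by rewrite inE.
pose U := [set u | b (X + u)].
have nU : nbhs 0 U.
  have := nbhsB (-X) nb; rewrite addNr; apply: filterS => w [z bz <-].
  by rewrite /U /= addrA subrr add0r.
have cU : forall u1 u2 l, 0 <= l <= 1 -> U u1 -> U u2 -> U (cmb l u1 u2).
  move=> u1 u2 l l01 U1 U2; rewrite /U /=.
  have -> : X + cmb l u1 u2 = cmb l (X + u1) (X + u2) by rewrite cmbD cmbxx.
  exact: bconv.
have sepU : forall u, U u -> ~ L (X + u).
  move=> u Uu Lu; have := hW _ (bW _ Uu).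
  by rewrite ltNge; move: Lu; rewrite /L /= => ->.
have [psi [[psilin psic] psiL]] := separation cL cU nU sepU LY.
have psiD : forall a c, psi (a + c) = psi a + psi c.
  by move=> a c; have := psilin 1 a c; rewrite scale1r mul1r.
have Bpsi : barrier_cone A psi.
  split; first by split.
  apply: (@lt_le_trans _ _ (psi X + psi (V1 x))%:E); first exact: ltNyr.
  rewrite /sigmaA; apply: le_ereal_inf_tmp => z [Z AZ <-].
  rewrite lee_fin.
  have LZ : L (Z - V1 x).
    rewrite /L /=; apply: (@le_trans _ _ (V0 x)%:E); last by rewrite lee_fin ltW.
    rewrite /rho /rho_of; apply: ereal_inf_lbound; exists x => //; split => //.
    by rewrite subrK.
  have := psiL _ LZ.
  have : psi Z = psi (Z - V1 x) + psi (V1 x) by rewrite -psiD subrK.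
  lra.
apply: ereal_sup_ge; exists (rho_cond rho X psi); first by exists psi.
rewrite /rho_cond; apply: le_ereal_inf_tmp => z [Z hZ <-].
rewrite leNgt; apply/negP => h.
have := psiL Z (ltW h); rewrite /= in hZ; lra.
Qed.
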